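(* Let $p\ge 0$ be an integer, $n=2p+1$, and define $N_p(R)=\sum_{\sigma\in X_{p+1}}W_2(\sigma,R)$ and $D_p(R)=\sum_{\sigma\in X_{p-1}}W_0(\sigma,R)$. Then (1) $N_p(R)$ is a monic polynomial of degree $\frac{(p+1)(p+2)}{2}$ all of whose coefficients (of $R^i$, $0\le i\le\frac{(p+1)(p+2)}{2}$) are positive; (2) $D_p(R)$ is a monic polynomial of degree $\frac{p(p-1)}{2}$ all of whose coefficients are positive; (3) $N_p(0)=n!\,D_p(0)$.
   Context: A Schröder path is a finite directed path in $\mathbb{Z}^2$ each of whose steps is an ascent $(x,y)\to(x+1,y+1)$, a descent $(x,y)\to(x+1,y-1)$, or a flat step $(x,y)\to(x+2,y)$ (the empty path is allowed). Let $P_i=(-i,i)$, $Q_i=(i,i)$. For $k\ge 0$, $X_k$ is the set of collections of $k+1$ pairwise vertex-disjoint Schröder paths from $\{P_i\}_{i=0}^k$ to $\{Q_i\}_{i=0}^k$; $X_{-1}$ consists only of the empty collection. $W_0(\sigma,R)$ is the product over all steps of $\sigma$ of: $1$ per ascent, $R$ per flat step, $y+1$ per descent starting at height $y$. $W_2(\sigma,R)$ is the same but with $y-1$ per descent starting at height $y$. Empty products are $1$. *)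

(* Defs.v *)
From HB Require Import structures.
From mathcomp Require Import all_boot all_order all_algebra all_fingroup.
Set Implicit Arguments. Unset Strict Implicit. Unset Printing Implicit Defensive.
Import GRing.Theory Num.Theory.
Local Open Scope ring_scope.

Inductive step := Up | Down | Flat.

Definition step_to (s : step) : 'I_3 :=
  match s with Up => inord 0 | Down => inord 1 | Flat => inord 2 end.
Definition step_of (i : 'I_3) : step :=
  match val i with 0%N => Up | 1%N => Down | _ => Flat end.
Lemma step_toK : cancel step_to step_of.
Proof. by case; rewrite /step_of /= inordK. Qed.
HB.instance Definition _ := Finite.copy step (can_type step_toK).

Definition point := (int * int)%type.

Definition move (v : point) (a : step) : point :=
  match a with
  | Up => (v.1 + 1, v.2 + 1)
  | Down => (v.1 + 1, v.2 - 1)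
  | Flat => (v.1 + 2, v.2)
  end.

Fixpoint vertices (v : point) (s : seq step) : seq point :=
  v :: (if s is a :: s' then vertices (move v a) s' else [::]).

Definition endpoint (v : point) (s : seq step) : point := foldl move v s.

Definition Ppt (i : nat) : point := (- (i%:Z), i%:Z).
Definition Qpt (i : nat) : point := (i%:Z, i%:Z).

(** Weight of a path starting at height [y]: 1 per ascent, R per flat step,
    [d y] per descent starting at height y.  W_0 uses d y = y+1, W_2 uses
    d y = y-1. *)
Fixpoint weight (d : int -> int) (y : int) (s : seq step) : {poly int} :=
  match s with
  | [::] => 1
  | Up :: s' => weight d (y + 1) s'
  | Flat :: s' => 'X * weight d y s'
  | Down :: s' => (d y)%:P * weight d (y - 1) s'
  end.

Definition d0 (y : int) : int := y + 1.
Definition d2 (y : int) : int := y - 1.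

(** A collection of m paths: path i starts at P_i (steps sigma i).  Every path
    from some P_i to some Q_j has at most i+j <= 2m steps, so bounded sequences
    of length <= 2m capture all paths. *)
Definition collection (m : nat) := {ffun 'I_m -> (2 * m).-bseq step}.

Definition path_i (m : nat) (sigma : collection m) (i : 'I_m) : seq step :=
  val (sigma i).

(** sigma is in X_{m-1}: the paths go from {P_i}_{i<m} onto {Q_i}_{i<m}
    (path i ends at Q_{pi i} for a permutation pi) and are pairwise
    vertex-disjoint. *)
Definition in_X (m : nat) (sigma : collection m) : bool :=
  [exists pi : 'S_m,
     [forall i : 'I_m, endpoint (Ppt i) (path_i sigma i) == Qpt (pi i)]]
  && [forall i : 'I_m, forall j : 'I_m, (i != j) ==>
        ~~ has (fun v => v \in vertices (Ppt j) (path_i sigma j))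
               (vertices (Ppt i) (path_i sigma i))].

Definition coll_weight (d : int -> int) (m : nat) (sigma : collection m)
  : {poly int} :=
  \prod_(i < m) weight d (Ppt i).2 (path_i sigma i).

(** Generating sum over X_{m-1} (m = number of paths; m = 0 gives X_{-1}). *)
Definition Xsum (d : int -> int) (m : nat) : {poly int} :=
  \sum_(sigma : collection m | in_X sigma) coll_weight d sigma.

Definition Npoly (p : nat) : {poly int} := Xsum d2 (p + 2).
Definition Dpoly (p : nat) : {poly int} := Xsum d0 p.

(* Main.v *)
Require Import Defs.
From mathcomp Require Import all_boot all_order all_algebra all_fingroup.
From mathcomp Require Import zify ring.
Import GRing.Theory Num.Theory.
Local Open Scope ring_scope.

Definition isU (a : step) := if a is Up then true else false.
Definition isD (a : step) := if a is Down then true else false.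
Definition isF (a : step) := if a is Flat then true else false.
Definition nU s := count isU s.
Definition nD s := count isD s.
Definition nF s := count isF s.

Lemma count_steps s : (nU s + nD s + nF s = size s)%N.
Proof. rewrite /nU /nD /nF; elim: s => //= a s IH; case: a => /=; lia. Qed.

Lemma endpoint_cons p a s : endpoint p (a :: s) = endpoint (move p a) s.
Proof. by []. Qed.

Lemma endpointE p s : endpoint p s =
  (p.1 + (nU s + nD s + 2 * nF s)%N%:Z, p.2 + (nU s)%:Z - (nD s)%:Z).
Proof.
rewrite /nU /nD /nF.
elim: s p => [|a s IH] [x y]; first by rewrite /endpoint /=; congr pair; lia.
rewrite endpoint_cons IH; case: a => /=; congr pair; lia.
Qed.

Lemma endpoint_cat p s1 s2 : endpoint p (s1 ++ s2) = endpoint (endpoint p s1) s2.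
Proof. by rewrite /endpoint foldl_cat. Qed.

Lemma mem_vertices_cat v p s1 s2 : v \in vertices p (s1 ++ s2) ->
  v \in vertices p s1 \/ v \in vertices (endpoint p s1) s2.
Proof.
elim: s1 p => [|a s1 IH] p /=; first by right.
rewrite !in_cons => /orP [->|/IH]; first by left.
by case=> [->|]; [left; rewrite orbT | right].
Qed.

Lemma mem_vertices_nseq v p n a : v \in vertices p (nseq n a) ->
  exists2 k, (k <= n)%N & v = endpoint p (nseq k a).
Proof.
elim: n p => [|n IH] p /=; first by rewrite inE => /eqP ->; exists 0%N.
rewrite inE => /orP [/eqP ->|/IH [k Hk ->]]; first by exists 0%N.
by exists k.+1.
Qed.

Lemma mem_vertices_take p s k : endpoint p (take k s) \in vertices p s.
Proof.
elim: s p k => [|a s IH] p [|k] /=; rewrite ?inE ?eqxx //.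
by apply/orP; right; apply: IH.
Qed.

Fixpoint cw (d : int -> int) (y : int) (s : seq step) : int :=
  match s with
  | [::] => 1
  | Up :: s' => cw d (y + 1) s'
  | Flat :: s' => cw d y s'
  | Down :: s' => d y * cw d (y - 1) s'
  end.

Lemma weightE d y s : weight d y s = (cw d y s)%:P * 'X^(nF s).
Proof.
rewrite /nF; elim: s y => [|a s IH] y /=; first by rewrite mulr1.
case: a => /=; rewrite IH //.
  by rewrite polyCM mulrA.
by rewrite exprS mulrCA.
Qed.

Definition hat (i f : nat) : seq step :=
  nseq (i - f) Up ++ nseq f Flat ++ nseq (i - f) Down.

Lemma hat_counts i f :
  [/\ nU (hat i f) = (i - f)%N, nD (hat i f) = (i - f)%N & nF (hat i f) = f].
Proof. by rewrite /nU /nD /nF /hat !count_cat !count_nseq /=; split; lia. Qed.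

Lemma nseq_counts n a :
  [/\ nU (nseq n a) = (isU a * n)%N, nD (nseq n a) = (isD a * n)%N
    & nF (nseq n a) = (isF a * n)%N].
Proof. by rewrite /nU /nD /nF !count_nseq. Qed.

Definition Qh (i f : nat) (v : point) :=
  [/\ i%:Z <= v.2, v.2 <= (2*i - f)%N%:Z, v.2 + v.1 <= (2*i)%N%:Z,
      v.2 - v.1 <= (2*i)%N%:Z &
      (f = 0%N -> v.2 + v.1 = (2*i)%N%:Z \/ v.2 - v.1 = (2*i)%N%:Z)].

Lemma hat_vertices i f v : (f <= i)%N ->
  v \in vertices (Ppt i) (hat i f) -> Qh i f v.
Proof.
move=> fi; rewrite /hat.
move/mem_vertices_cat => [/mem_vertices_nseq [k Hk ->]|].
  rewrite endpointE; case: (nseq_counts k Up) => -> -> -> /=.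
  rewrite /Qh /Ppt /=; split; lia.
move/mem_vertices_cat => [/mem_vertices_nseq [k Hk ->]|/mem_vertices_nseq [k Hk ->]].
  rewrite !endpointE; case: (nseq_counts k Flat) => -> -> ->;
  case: (nseq_counts (i - f) Up) => -> -> -> /=.
  rewrite /Qh /Ppt /=; split; lia.
rewrite !endpointE; case: (nseq_counts k Down) => -> -> ->;
case: (nseq_counts f Flat) => -> -> ->;
case: (nseq_counts (i - f) Up) => -> -> -> /=.
rewrite /Qh /Ppt /=; split; lia.
Qed.

Lemma Qh_disj i j f g v : (i < j)%N -> (2*i - f < j)%N \/ g = 0%N ->
  Qh i f v -> Qh j g v -> False.
Proof.
move=> ij [H|H] [h1 h2 h3 h4 h5] [k1 k2 k3 k4 k5]; first lia.
case: (k5 H); lia.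
Qed.

Definition hatc (m : nat) (fs : nat -> nat) : collection m :=
  [ffun i : 'I_m => insub_bseq (2 * m) (hat i (fs i))].

Lemma path_hatc m fs i : (forall i, fs i <= i)%N ->
  path_i (hatc m fs) i = hat i (fs i).
Proof.
move=> Hf; rewrite /path_i ffunE /insub_bseq insubdK // unfold_in /hat !size_cat !size_nseq; have := Hf i; have := ltn_ord i; lia.
Qed.

Lemma hatc_inX m fs : (forall i, fs i <= i)%N ->
  (forall i j : nat, (i < j)%N -> (j < m)%N -> (2*i - fs i < j)%N \/ fs j = 0%N) ->
  in_X (hatc m fs).
Proof.
move=> Hf Hc; apply/andP; split.
  apply/existsP; exists 1%g; apply/forallP => i; rewrite perm1 path_hatc //.
  rewrite endpointE; case: (hat_counts i (fs i)) => -> -> ->.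
  apply/eqP; rewrite /Ppt /Qpt /=; move: (Hf i) => Hfi; congr pair; lia.
apply/forallP => i; apply/forallP => j; apply/implyP => nij.
apply/hasPn => v Hv; apply/negP => Hv'.
rewrite path_hatc // in Hv; rewrite path_hatc // in Hv'.
have Q1 := hat_vertices _ _ _ (Hf i) Hv; have Q2 := hat_vertices _ _ _ (Hf j) Hv'.
case: (ltngtP i j) => [ij|ji|/val_inj eij]; last by rewrite eij eqxx in nij.
  exact: (Qh_disj _ _ _ _ _ ij (Hc _ _ ij (ltn_ord j)) Q1 Q2).
exact: (Qh_disj _ _ _ _ _ ji (Hc _ _ ji (ltn_ord i)) Q2 Q1).
Qed.

Lemma cw_nseqU d y n s : cw d y (nseq n Up ++ s) = cw d (y + n%:Z) s.
Proof.
elim: n y => [|n IH] y /=; first by rewrite addr0.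
by rewrite IH; congr cw; lia.
Qed.

Lemma cw_nseqF d y n s : cw d y (nseq n Flat ++ s) = cw d y s.
Proof. by elim: n. Qed.

Lemma cw_nseqD d y n : cw d y (nseq n Down) = \prod_(k < n) d (y - k%:Z).
Proof.
elim: n y => [|n IH] y /=; first by rewrite big_ord0.
rewrite big_ord_recl IH /= subr0; congr (_ * _); apply: eq_bigr => k _.
congr d; rewrite /bump /=; lia.
Qed.

Lemma cw_hat d i f :
  cw d i%:Z (hat i f) = \prod_(k < i - f) d (i%:Z + (i - f)%:Z - k%:Z).
Proof. by rewrite /hat cw_nseqU cw_nseqF cw_nseqD. Qed.

Definition cwp d m (sigma : collection m) :=
  \prod_(i < m) cw d (Ppt i).2 (path_i sigma i).
Definition nfs m (sigma : collection m) :=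
  (\sum_(i < m) nF (path_i sigma i))%N.
Arguments cwp d {m} sigma.
Arguments nfs {m} sigma.

Lemma coll_weightE d m (sigma : collection m) :
  coll_weight d sigma = (cwp d sigma)%:P * 'X^(nfs sigma).
Proof.
rewrite /coll_weight; under eq_bigr do rewrite weightE.
by rewrite big_split /= -rmorph_prod prodrXr.
Qed.

Lemma coef_Xsum d m k : (Xsum d m)`_k =
  \sum_(sigma : collection m | in_X sigma) cwp d sigma * (k == nfs sigma)%:R.
Proof.
rewrite /Xsum coef_sum; apply: eq_bigr => s _.
by rewrite coll_weightE mul_polyC coefZ coefXn.
Qed.

Lemma inX_perm m (sigma : collection m) : in_X sigma -> exists pi : 'S_m,
  forall i : 'I_m,
  (nU (path_i sigma i) + nD (path_i sigma i) + 2 * nF (path_i sigma i) = i + pi i)%N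
  /\ (nU (path_i sigma i) + i = nD (path_i sigma i) + pi i)%N.
Proof.
case/andP => /existsP [pi /forallP H] _; exists pi => i.
move/eqP: (H i); rewrite endpointE /Ppt /Qpt /= => [[h1 h2]]; split; lia.
Qed.

Lemma inX_disj m (sigma : collection m) (i j : 'I_m) v : in_X sigma -> i != j ->
  v \in vertices (Ppt i) (path_i sigma i) ->
  v \in vertices (Ppt j) (path_i sigma j) -> False.
Proof.
case/andP => _ /forallP /(_ i) /forallP /(_ j) /implyP H nij H1 H2.
by move/hasPn: (H nij) => /(_ v H1); rewrite H2.
Qed.

Lemma seq_allF s : nU s = 0%N -> nD s = 0%N -> s = nseq (nF s) Flat.
Proof. rewrite /nU /nD /nF; elim: s => //= [[]] s IH //= h1 h2; by rewrite -IH. Qed.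
Lemma seq_allU s : nF s = 0%N -> nD s = 0%N -> s = nseq (nU s) Up.
Proof. rewrite /nU /nD /nF; elim: s => //= [[]] s IH //= h1 h2; by rewrite -IH. Qed.
Lemma seq_allD s : nU s = 0%N -> nF s = 0%N -> s = nseq (nD s) Down.
Proof. rewrite /nU /nD /nF; elim: s => //= [[]] s IH //= h1 h2; by rewrite -IH. Qed.

Definition Sm (m : nat) := (\sum_(i < m) (i : nat))%N.

Lemma sum_perm m (pi : 'S_m) : (\sum_(i < m) pi i = Sm m)%N.
Proof. by rewrite /Sm [RHS](reindex_inj (@perm_inj _ pi)). Qed.

Lemma nfs_top m (sigma : collection m) : in_X sigma ->
  (nfs sigma <= Sm m)%N /\ (nfs sigma = Sm m -> sigma = hatc m (fun i => i)).
Proof.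
move=> HX; have [pi Hpi] := inX_perm _ _ HX.
have Hl : forall i : 'I_m, (2 * nF (path_i sigma i) <= i + pi i)%N.
  by move=> i; have [h1 h2] := Hpi i; lia.
have L := @leqif_sum _ predT
  (fun i => 2 * nF (path_i sigma i) == i + pi i)%N
  (fun i => 2 * nF (path_i sigma i))%N (fun i => i + pi i)%N
  (fun i _ => leqif_eq (Hl i)).
case: L => Hle Heq.
rewrite -big_distrr big_split /= sum_perm -/(Sm m) -/(nfs sigma) in Hle Heq.
split; first lia.
move=> Hn; have: (2 * nfs sigma == Sm m + Sm m)%N by apply/eqP; lia.
rewrite Heq => /forallP Hall.
apply/ffunP => i; apply: val_inj.
change (path_i sigma i = path_i (hatc m (fun i => i)) i).
rewrite path_hatc // /hat subnn /=.
have := Hpi i; move/eqP: (Hall i) => h [h1 h2].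
transitivity (nseq (nF (path_i sigma i)) Flat).
  by apply: seq_allF; lia.
by rewrite cats0; f_equal; lia.
Qed.

Lemma inj_le_id m (f : 'I_m -> nat) : (forall i, f i <= i)%N ->
  (forall i j, f i = f j -> i = j) -> forall i, f i = i.
Proof.
move=> Hle Hinj.
suff H : forall n (i : 'I_m), (i < n)%N -> f i = i by move=> i; apply: (H i.+1).
elim=> [|n IH] i //; rewrite ltnS leq_eqVlt => /orP [/eqP ein|]; last exact: IH.
have := Hle i; rewrite leq_eqVlt => /orP [/eqP //|lt].
have kl : (f i < m)%N by apply: ltn_trans lt (ltn_ord i).
have := IH (Ordinal kl); rewrite /= -ein => /(_ lt) H.
have /(congr1 val) /= := Hinj _ _ H; lia.
Qed.

Lemma nfs_zero m (sigma : collection m) : in_X sigma -> nfs sigma = 0%N ->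
  sigma = hatc m (fun _ => 0%N).
Proof.
move=> HX Hn; have [pi Hpi] := inX_perm _ _ HX.
have HF : forall i, nF (path_i sigma i) = 0%N.
  by move/eqP: Hn; rewrite /nfs sum_nat_eq0 => /forallP H i; apply/eqP; apply: H.
set s := path_i sigma in Hpi HF *.
have HUD : forall i : 'I_m, nU (s i) = pi i /\ nD (s i) = i.
  by move=> i; have := Hpi i; have := HF i; lia.
have Hsz : forall i : 'I_m, size (s i) = (i + pi i)%N.
  by move=> i; rewrite -count_steps; have := HUD i; have := HF i; lia.
have Hcat : forall i : 'I_m, [/\ nU (s i) = (nU (take i (s i)) + nU (drop i (s i)))%N,
   nD (s i) = (nD (take i (s i)) + nD (drop i (s i)))%N &
   nF (s i) = (nF (take i (s i)) + nF (drop i (s i)))%N].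
  by move=> i; rewrite /nU /nD /nF -!count_cat !cat_take_drop.
have Hszt : forall i : 'I_m, size (take i (s i)) = i.
  by move=> i; rewrite size_takel // Hsz leq_addr.
pose a (i : 'I_m) := nU (take i (s i)).
have Hv : forall i : 'I_m, endpoint (Ppt i) (take i (s i)) = (0, (2 * a i)%N%:Z).
  move=> i; rewrite endpointE /Ppt /=.
  move: (count_steps (take i (s i))); rewrite Hszt => hc.
  case: (Hcat i); rewrite HF => _ _ h3; rewrite /a; congr pair; lia.
have Ainj : forall i j, a i = a j -> i = j.
  move=> i j Ha; apply/eqP/negPn/negP => nij.
  apply: (inX_disj _ sigma i j (endpoint (Ppt i) (take i (s i))) HX nij).
    exact: mem_vertices_take.
  by rewrite Hv Ha -Hv mem_vertices_take.
have Ale : forall i : 'I_m, (a i <= i)%N.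
  by move=> i; rewrite /a -{2}(Hszt i) /nU count_size.
have Aid := inj_le_id _ _ Ale Ainj.
have Api : forall i : 'I_m, (i <= pi i)%N.
  move=> i; rewrite -{1}(Aid i) /a; case: (HUD i) => <- _.
  by case: (Hcat i) => -> _ _; apply: leq_addr.
have Pid : forall i, pi i = i.
  have Hle : forall j, ((pi^-1)%g j <= j)%N.
    by move=> j; have := Api ((pi^-1)%g j); rewrite permKV.
  have := inj_le_id _ _ Hle (fun i j (h : val ((pi^-1)%g i) = val ((pi^-1)%g j)) =>
     perm_inj (val_inj h)).
  move=> H i; apply: val_inj; have := H i => /val_inj h.
  by rewrite -[in LHS]h permKV.
apply/ffunP => i; apply: val_inj.
change (s i = path_i (hatc m (fun _ => 0%N)) i).
rewrite path_hatc // /hat subn0 /=.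
rewrite -(cat_take_drop i (s i)); congr (_ ++ _).
  have h := Aid i; rewrite /a in h.
  rewrite (seq_allU (take i (s i))) ?h //.
    by case: (Hcat i); rewrite HF; lia.
  have := count_steps (take i (s i)); rewrite Hszt h; lia.
have := count_steps (drop i (s i)); rewrite size_drop Hsz.
have := Aid i; rewrite /a; case: (Hcat i); case: (HUD i); rewrite HF Pid => h1 h2 h3 h4 h5 h6 h7.
rewrite (seq_allD (drop i (s i))); first (by f_equal; lia); lia.
Qed.

Lemma nfs_hatc m fs : (forall i, fs i <= i)%N ->
  nfs (hatc m fs) = (\sum_(i < m) fs i)%N.
Proof.
move=> Hf; rewrite /nfs; apply: eq_bigr => i _.
by rewrite path_hatc //; case: (hat_counts i (fs i)).
Qed.

Lemma exists_fs m k : (k <= Sm m)%N -> exists fs : nat -> nat,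
  [/\ (forall i, fs i <= i)%N,
      (forall i j : nat, (i < j)%N -> (j < m)%N -> (2*i - fs i < j)%N \/ fs j = 0%N)
    & (\sum_(i < m) fs i)%N = k].
Proof.
elim: m k => [|m IH] k.
  by rewrite /Sm big_ord0 leqn0 => /eqP ->; exists (fun _ => 0%N); split=> //; rewrite big_ord0.
rewrite /Sm big_ord_recr /= -/(Sm m) => Hk.
case: (leqP k (Sm m)) => Hkm.
  have [fs [H1 H2 H3]] := IH k Hkm.
  exists (fun i => if (i < m)%N then fs i else 0%N); split.
  - by move=> i; case: ifP.
  - move=> i j ij jm; rewrite ltnS leq_eqVlt in jm; case/orP: jm => [/eqP ->|jm].
      by right; rewrite ltnn.
    by rewrite jm (ltn_trans ij jm); apply: H2.
  - rewrite big_ord_recr /= ltnn addn0 -H3; apply: eq_bigr => i _.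
    by rewrite ltn_ord.
exists (fun i => if (i < m)%N then i else if i == m then (k - Sm m)%N else 0%N); split.
- move=> i; case: ltnP => // _; case: eqP => [->|//]; lia.
- move=> i j ij jm; left; have im : (i < m)%N by lia.
  rewrite im; lia.
- rewrite big_ord_recr /= ltnn eqxx.
  have -> : (\sum_(i < m) (if (i < m)%N then (i : nat) else if (i : nat) == m then (k - Sm m)%N else 0%N) = Sm m)%N.
    by apply: eq_bigr => i _; rewrite ltn_ord.
  lia.
Qed.

Section Generic.
Variable d : int -> int.
Hypothesis Hpos : forall i f k : nat, (f <= i)%N -> (k < i - f)%N ->
  0 < d (i%:Z + (i - f)%:Z - k%:Z).
Hypothesis Hnn : forall m (sigma : collection m), in_X sigma -> 0 <= cwp d sigma.

Lemma cwp_hatc_pos m fs : (forall i, fs i <= i)%N -> 0 < cwp d (hatc m fs).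
Proof.
move=> Hf; rewrite /cwp; apply: prodr_gt0 => i _.
rewrite path_hatc // /Ppt /= cw_hat; apply: prodr_gt0 => k _.
exact: Hpos.
Qed.

Lemma Xsum_pos m k : (k <= Sm m)%N -> 0 < (Xsum d m)`_k.
Proof.
move=> Hk; have [fs [H1 H2 H3]] := exists_fs _ _ Hk.
rewrite coef_Xsum (bigD1 (hatc m fs)) /=; last exact: hatc_inX.
rewrite nfs_hatc // H3 eqxx mulr1.
have A := cwp_hatc_pos m _ H1.
apply: (Order.POrderTheory.lt_le_trans A); rewrite lerDl.
by apply: sumr_ge0 => s /andP [Hs _]; apply: mulr_ge0; [exact: Hnn|exact: ler0n].
Qed.

Lemma Xsum_hi m k : (Sm m < k)%N -> (Xsum d m)`_k = 0.
Proof.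
move=> Hk; rewrite coef_Xsum; apply: big1 => s Hs.
have [h _] := nfs_top _ _ Hs.
have -> : (k == nfs s) = false by apply/negbTE/eqP; lia.
by rewrite mulr0.
Qed.

Lemma Xsum_top m : (Xsum d m)`_(Sm m) = 1.
Proof.
have Hf : forall i : nat, (i <= i)%N by [].
rewrite coef_Xsum (bigD1 (hatc m (fun i => i))) /=; last first.
  by apply: hatc_inX => // i j ij _; left; lia.
rewrite nfs_hatc // -/(Sm m) eqxx mulr1 big1 ?addr0.
  rewrite /cwp big1 // => i _; rewrite path_hatc // /Ppt /= cw_hat subnn.
  by rewrite big_ord0.
move=> s /andP [Hs ns]; have [_ h] := nfs_top _ _ Hs.
have -> : (Sm m == nfs s) = false.
  by apply/negP => /eqP e; move: ns; rewrite (h (esym e)) eqxx.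
by rewrite mulr0.
Qed.

Lemma Xsum_size m : size (Xsum d m) = (Sm m).+1.
Proof.
apply/eqP; rewrite eqn_leq; apply/andP; split.
  by apply/leq_sizeP => j hj; apply: Xsum_hi.
rewrite ltnNge; apply/negP => /leq_sizeP /(_ (Sm m) (leqnn _)).
by rewrite Xsum_top => /eqP; rewrite oner_eq0.
Qed.

Lemma Xsum_monic m : Xsum d m \is monic.
Proof. by rewrite monicE /lead_coef Xsum_size /= Xsum_top. Qed.

Lemma Xsum_eval0 m : (Xsum d m).[0] =
  \prod_(i < m) \prod_(k < i) d (i%:Z + i%:Z - k%:Z).
Proof.
rewrite horner_coef0 coef_Xsum (bigD1 (hatc m (fun _ => 0%N))) /=; last first.
  by apply: hatc_inX => // i j ij _; right.
rewrite nfs_hatc //.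
have -> : (\sum_(i < m) 0)%N = 0%N by rewrite big1.
rewrite eqxx mulr1 big1 ?addr0.
  rewrite /cwp; apply: eq_bigr => i _.
  by rewrite path_hatc // /Ppt /= cw_hat subn0.
move=> s /andP [Hs ns].
have -> : (0%N == nfs s) = false.
  by apply/negP => /eqP e; move: ns; rewrite (nfs_zero _ _ Hs (esym e)) eqxx.
by rewrite mulr0.
Qed.
End Generic.

Lemma cw_noD d y s : nD s = 0%N -> cw d y s = 1.
Proof. rewrite /nD; elim: s y => //= [[]] s IH y //= h; exact: IH. Qed.

Lemma cw_d0_ge0 y s : -1 <= y -> 0 <= cw d0 y s.
Proof.
elim: s y => //= [[]] s IH y hy /=.
- apply: IH; lia.
- have [->|ne] := eqVneq y (-1); first by rewrite /d0 /= mul0r.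
  apply: mulr_ge0; first by rewrite /d0; lia.
  apply: IH; lia.
- exact: IH.
Qed.

Lemma cw_d2_ge0 y s : 1 <= y -> 0 <= cw d2 y s.
Proof.
elim: s y => //= [[]] s IH y hy /=.
- apply: IH; lia.
- have [->|ne] := eqVneq y 1; first by rewrite /d2 /= mul0r.
  apply: mulr_ge0; first by rewrite /d2; lia.
  apply: IH; lia.
- exact: IH.
Qed.

Lemma Hpos0 : forall i f k : nat, (f <= i)%N -> (k < i - f)%N ->
  0 < d0 (i%:Z + (i - f)%:Z - k%:Z).
Proof. move=> i f k h1 h2; rewrite /d0; lia. Qed.

Lemma Hpos2 : forall i f k : nat, (f <= i)%N -> (k < i - f)%N ->
  0 < d2 (i%:Z + (i - f)%:Z - k%:Z).
Proof. move=> i f k h1 h2; rewrite /d2; lia. Qed.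

Lemma Hnn0 : forall m (sigma : collection m), in_X sigma -> 0 <= cwp d0 sigma.
Proof.
move=> m sigma _; apply: prodr_ge0 => i _; apply: cw_d0_ge0; rewrite /Ppt /=; lia.
Qed.

Lemma Hnn2 : forall m (sigma : collection m), in_X sigma -> 0 <= cwp d2 sigma.
Proof.
move=> m sigma HX; have [pi Hpi] := inX_perm _ _ HX.
apply: prodr_ge0 => i _.
case: (posnP i) => [i0|ip].
  rewrite cw_noD //; have := Hpi i; rewrite i0; lia.
apply: cw_d2_ge0; rewrite /Ppt /=; lia.
Qed.

Lemma Sm_eq m : Sm m = (m * m.-1)./2.
Proof. by rewrite /Sm -(big_mkord xpredT (fun i => i)) bin2_sum bin2. Qed.

Lemma fact_ord n : n`! = (\prod_(i < n) i.+1)%N.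
Proof.
elim: n => [|n IH]; first by rewrite big_ord0.
by rewrite big_ord_recr /= -IH factS mulnC.
Qed.

Lemma prod_d2 i : \prod_(k < i) d2 (i%:Z + i%:Z - k%:Z) =
  (\prod_(k < i) (i + i - k - 1))%N%:R.
Proof.
rewrite natr_prod; apply: eq_bigr => k _; rewrite /d2 natz.
have := ltn_ord k; lia.
Qed.

Lemma prod_d0 i : \prod_(k < i) d0 (i%:Z + i%:Z - k%:Z) =
  ((2 * i + 1) ^_ i)%N%:R.
Proof.
rewrite ffact_prod natr_prod; apply: eq_bigr => k _; rewrite /d0 natz.
have := ltn_ord k; lia.
Qed.

Lemma bS i : (\prod_(k < i.+1) (i.+1 + i.+1 - k - 1))%N = ((2 * i + 1) ^_ i * i.+1)%N.
Proof.
rewrite big_ord_recr /= ffact_prod; congr (_ * _)%N; last lia.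
apply: eq_bigr => k _; have := ltn_ord k; lia.
Qed.

Lemma nat_ident p :
  (\prod_(i < p + 2) \prod_(k < i) (i + i - k - 1))%N =
  ((2 * p + 1)`! * \prod_(i < p) (2 * i + 1) ^_ i)%N.
Proof.
rewrite addn2 big_ord_recl big_ord0 mul1n.
under eq_bigr => i _ do rewrite /= bS.
rewrite big_split /= -fact_ord big_ord_recr /=.
have := @ffact_fact (2 * p + 1) p (ltac:(lia)).
have -> : (2 * p + 1 - p = p.+1)%N by lia.
move=> <-; lia.
Qed.

Theorem theorem6p3 (p : nat) :
  let n := (2 * p + 1)%N in
  [/\ [/\ Npoly p \is monic,
          (size (Npoly p)).-1 = ((p + 1) * (p + 2))./2
        & forall i : nat, (i <= ((p + 1) * (p + 2))./2)%N -> 0 < (Npoly p)`_i],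
      [/\ Dpoly p \is monic,
          (size (Dpoly p)).-1 = (p * (p - 1))./2
        & forall i : nat, (i <= (p * (p - 1))./2)%N -> 0 < (Dpoly p)`_i]
    & (Npoly p).[0] = (n`!)%:R * (Dpoly p).[0]].
Proof.
move=> n.
have EN : ((p + 1) * (p + 2))./2 = Sm (p + 2).
  by rewrite Sm_eq addn2 /= mulnC addn1.
have ED : (p * (p - 1))./2 = Sm p by rewrite Sm_eq subn1.
rewrite /Npoly /Dpoly EN ED; split.
- split.
  + exact: Xsum_monic.
  + by rewrite Xsum_size.
  + by move=> i hi; apply: (Xsum_pos d2 Hpos2 Hnn2 _ _ hi).
- split.
  + exact: Xsum_monic.
  + by rewrite Xsum_size.
  + by move=> i hi; apply: (Xsum_pos d0 Hpos0 Hnn0 _ _ hi).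
rewrite !Xsum_eval0.
under eq_bigr => i _ do rewrite prod_d2.
under [in RHS]eq_bigr => i _ do rewrite prod_d0.
by rewrite -!natr_prod nat_ident natrM.
Qed.
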